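(* Let $A\subseteq\mathbb{R}^d$ be a rational affine subspace containing some point $\vec{x}\in\mathbb{N}^d$. Then there exists a constant $c>0$ such that for every $p^*\in\mathbb{N}_+$ and every $\vec{y}\in\{\vec{x}+p^*\vec{z}:\vec{z}\in\mathbb{Z}^d\}$ with $\vec{y}\notin A$, the Euclidean distance satisfies $\mathrm{dist}(\vec{y},A)\ge c\,p^*$.
   Context: A rational affine subspace of $\mathbb{R}^d$ is the solution set of a finite system of linear equations $\vec{a}\cdot\vec{z}=b$ with $\vec{a}\in\mathbb{Q}^d$, $b\in\mathbb{Q}$. *)

(* Defs.v *)
From HB Require Import structures.
From mathcomp Require Import all_boot all_order all_algebra.
From mathcomp Require Import boolp classical_sets reals.
Set Implicit Arguments. Unset Strict Implicit. Unset Printing Implicit Defensive.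
Import Order.TTheory GRing.Theory Num.Theory.
Local Open Scope classical_set_scope.
Local Open Scope ring_scope.

Definition rat_affine_set (R : realType) (d m : nat)
  (a : 'I_m -> 'I_d -> rat) (b : 'I_m -> rat) : set ('I_d -> R) :=
  [set z | forall i : 'I_m, \sum_(j < d) ratr (a i j) * z j = ratr (b i)].

Definition rational_affine (R : realType) (d : nat) (A : set ('I_d -> R)) : Prop :=
  exists m (a : 'I_m -> 'I_d -> rat) (b : 'I_m -> rat), A = @rat_affine_set R d m a b.

Definition eucl_norm (R : realType) (d : nat) (v : 'I_d -> R) : R :=
  Num.sqrt (\sum_(j < d) v j ^+ 2).

Definition dist_set (R : realType) (d : nat) (y : 'I_d -> R) (A : set ('I_d -> R)) : R :=
  inf [set eucl_norm (fun j => y j - w j) | w in A].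

(* Main.v *)
Require Import Defs.
From HB Require Import structures.
From mathcomp Require Import all_boot all_order all_algebra.
From mathcomp Require Import boolp classical_sets reals ring.
Import Order.TTheory GRing.Theory Num.Theory.
Local Open Scope classical_set_scope.
Local Open Scope ring_scope.

Lemma coord_le_norm (R : realType) d (v : 'I_d -> R) j : `|v j| <= eucl_norm v.
Proof.
rewrite /eucl_norm -sqrtr_sqr; apply: ler_wsqrtr.
rewrite (bigD1 j) //= lerDl; apply: sumr_ge0 => k _; exact: sqr_ge0.
Qed.

Lemma lin_bound (R : realType) d (a v : 'I_d -> R) :
  `|\sum_j a j * v j| <= (\sum_j `|a j|) * eucl_norm v.
Proof.
apply: le_trans (ler_norm_sum _ _ _) _.
rewrite mulr_suml; apply: ler_sum => j _.
by rewrite normrM ler_wpM2l // coord_le_norm.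
Qed.

Lemma denom_ex m d (a : 'I_m -> 'I_d -> rat) :
  exists D : rat, 0 < D /\ forall i j, D * a i j \is a Num.int.
Proof.
exists (\prod_i \prod_j (denq (a i j))%:~R); split.
  by apply: prodr_gt0 => i _; apply: prodr_gt0 => j _; rewrite ltr0z denq_gt0.
move=> i j; rewrite (bigD1 i) //= (bigD1 j) //=.
set P := (\prod_(l | l != j) _). set Q := (\prod_(k | k != i) _).
have -> : (denq (a i j))%:~R * P * Q * a i j = (a i j * (denq (a i j))%:~R) * (P * Q) by ring.
rewrite -numqE; apply: rpredM; first exact: rpred_int.
apply: rpredM; apply: rpred_prod => k _; last apply: rpred_prod => l _; exact: rpred_int.
Qed.

Theorem lemma29 (R : realType) (d : nat) (A : set ('I_d -> R))
  (hA : rational_affine A) (x : 'I_d -> nat)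
  (hx : A (fun j => (x j)%:R)) :
  exists c : R, 0 < c /\
    forall (p : nat) (z : 'I_d -> int), (0 < p)%N ->
      let y := (fun j => (x j)%:R + p%:R * (z j)%:~R) : 'I_d -> R in
      ~ A y -> c * p%:R <= dist_set y A.
Proof.
case: hA => m [a [b eA]]; subst A.
have [D [D0 DZ]] := denom_ex _ _ a.
pose K : R := 1 + \sum_i \sum_j `|ratr (a i j)|.
have K0 : 0 < K by rewrite /K ltr_pwDl // sumr_ge0 // => i _; rewrite sumr_ge0.
have RD0 : 0 < ratr D :> R by rewrite ltr0q.
exists ((ratr D * K)^-1); split; first by rewrite invr_gt0 mulr_gt0.
move=> p z p0 y nAy.
have [i /eqP ni] : exists i, ~ (\sum_(j < d) ratr (a i j) * y j = ratr (b i)).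
  exact/existsNP.
pose s := \sum_j a i j * (z j)%:~R.
have Ey : \sum_(j < d) ratr (a i j) * y j = ratr (b i) + p%:R * ratr s.
  rewrite -(hx i) /y /s rmorph_sum mulr_sumr -big_split /=; apply: eq_bigr => j _.
  by rewrite rmorphM /= rmorph_int; ring.
have s0 : s != 0.
  by apply: contraNneq ni => s0; rewrite Ey s0 rmorph0 mulr0 addr0.
have Ds1 : 1 <= ratr D * `|ratr s| :> R.
  rewrite -ratr_norm -rmorphM /= -(rmorph1 (ratr : rat -> R)) ler_rat.
  rewrite -(ger0_norm (ltW D0)) -normrM; apply: norm_intr_ge1; last by rewrite mulf_neq0 // gt_eqF.
  rewrite /s mulr_sumr; apply: rpred_sum => j _; rewrite mulrA; apply: rpredM => //; exact: rpred_int.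
have key : forall w, rat_affine_set a b w ->
    p%:R <= ratr D * K * eucl_norm (fun j => y j - w j).
  move=> w Aw.
  have E : \sum_j ratr (a i j) * (y j - w j) = p%:R * ratr s.
    have -> : p%:R * ratr s = \sum_j ratr (a i j) * y j - \sum_j ratr (a i j) * w j.
      by rewrite Ey (Aw i); ring.
    by rewrite -sumrB; apply: eq_bigr => j _; ring.
  have N0 : 0 <= eucl_norm (fun j => y j - w j) by exact: sqrtr_ge0.
  have L := lin_bound _ _ (fun j => ratr (a i j)) (fun j => y j - w j).
  rewrite /= E normrM ger0_norm ?ler0n // in L.
  have KiK : \sum_j `|ratr (a i j) : R| <= K.
    rewrite /K (bigD1 i) //= addrA ler_wpDr // ?sumr_ge0 // => [k _|]; first by rewrite sumr_ge0.
    by rewrite lerDr.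
  apply: (le_trans (y := p%:R * (ratr D * `|ratr s|))); first by rewrite ler_peMr.
  rewrite mulrCA -mulrA; apply: ler_wpM2l; first exact: ltW.
  apply: le_trans L _; exact: ler_wpM2r.
apply: lb_le_inf.
  by exists (eucl_norm (fun j => y j - (x j)%:R)), (fun j => (x j)%:R).
move=> _ [w Aw <-].
have DK0 : 0 < ratr D * K by rewrite mulr_gt0.
rewrite mulrC ler_pdivrMr // mulrC; exact: key.
Qed.
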